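(* Let $k,k'\in\mathbb{N}$ with $1\le k'\le k$. Let $\bar w,\bar x,\bar y,\bar z$ be binary sequences with $|\bar w|\ge|\bar x|\ge|\bar y|\ge|\bar z|$, each of which is top $k'$ sorted, and let $s=|\bar w|+|\bar x|+|\bar y|+|\bar z|\ge k$. Then $\mathrm{4oe\_merge}^s_k(\bar w,\bar x,\bar y,\bar z)$ is top $k'$ sorted.
   Context: Sorted means non-increasing. A binary sequence $\bar r$ of length $n$ is top $k'$ sorted if $\langle r_1,\dots,r_{\min(k',n)}\rangle$ is sorted and $r_i\ge r_j$ for all $i\le k'<j\le n$ (for $n\le k'$ this just means sorted). $\bar r_{odd}=\langle r_1,r_3,\dots\rangle$, $\bar r_{even}=\langle r_2,r_4,\dots\rangle$. For sequences $\bar a^1,\dots,\bar a^p$ with non-increasing lengths, $\mathrm{zip}(\bar a^1,\dots,\bar a^p)$ lists their elements in row-major order: $\langle a^1_1,a^2_1,\dots,a^p_1\rangle$ followed by $\mathrm{zip}$ of the remainders, where sequences that become empty are omitted. $\mathrm{oe\_combine}_K(\bar a,\bar b)$ (for $|\bar a|\ge|\bar b|$): let $\bar u=\mathrm{zip}(\bar a,\bar b)$; for $i=1,\dots,\lfloor\min(K,|\bar u|-1)/2\rfloor$ replace $(u_{2i},u_{2i+1})$ by $(\max,\min)$ of the pair; return $\bar u$. The network $\mathrm{4oe\_merge}^s_k(\bar w,\bar x,\bar y,\bar z)$ (for $|\bar w|\ge|\bar x|\ge|\bar y|\ge|\bar z|$, $s$ their total length, $k\ge 0$) is defined recursively, with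 $k_1,\dots,k_4$ the lengths of $\bar w,\bar x,\bar y,\bar z$: if $k_2=0$, return $\bar w$; else if $k_1=1$, return $\mathrm{zip}(\bar w,\bar x,\bar y,\bar z)$ sorted into non-increasing order; otherwise let $sa=\sum_j\lceil k_j/2\rceil$, $sb=\sum_j\lfloor k_j/2\rfloor$, $\bar a=\mathrm{4oe\_merge}^{sa}_{\min(sa,\lfloor k/2\rfloor+2)}(\bar w_{odd},\bar x_{odd},\bar y_{odd},\bar z_{odd})$, $\bar b=\mathrm{4oe\_merge}^{sb}_{\min(sb,\lfloor k/2\rfloor)}(\bar w_{even},\bar x_{even},\bar y_{even},\bar z_{even})$, $\bar c=\mathrm{oe\_combine}_{\lfloor k/2\rfloor+1}(\bar a_{odd},\bar b_{odd})$, $\bar d=\mathrm{oe\_combine}_{\lfloor k/2\rfloor}(\bar a_{even},\bar b_{even})$, and return $\mathrm{oe\_combine}_k(\bar c,\bar d)$. *)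

(* Defs.v *)
(* Binary sequences are [seq bool]; true = 1, false = 0.
   "Sorted" means non-increasing. Indices in the paper are 1-based; here 0-based. *)
From mathcomp Require Import all_boot.
Set Implicit Arguments. Unset Strict Implicit. Unset Printing Implicit Defensive.

Definition geb (a b : bool) : bool := b ==> a.

Definition sorted_desc (r : seq bool) : bool := sorted geb r.

Definition top_sorted (k' : nat) (r : seq bool) : bool :=
  sorted_desc (take k' r) &&
  all (fun a => all (fun b => geb a b) (drop k' r)) (take k' r).

(* r_odd = <r_1, r_3, ...> (1-based), r_even = <r_2, r_4, ...> *)
Definition odds (T : Type) (r : seq T) : seq T :=
  [seq x.2 | x <- zip (iota 0 (size r)) r & ~~ odd x.1].
Definition evens (T : Type) (r : seq T) : seq T :=
  [seq x.2 | x <- zip (iota 0 (size r)) r & odd x.1].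

(* zip(a^1,...,a^p) in row-major order, omitting exhausted sequences *)
Definition zipn (T : Type) (ls : seq (seq T)) : seq T :=
  flatten [seq pmap (fun l => onth l i) ls
          | i <- iota 0 (foldr maxn 0 (map size ls))].

(* oe_combine_K(a, b): u = zip(a,b); for i = 1..floor(min(K,|u|-1)/2),
   (u_{2i}, u_{2i+1}) := (max, min) (1-based).  In 0-based indices the pair is
   (2i-1, 2i). *)
Definition oe_combine (K : nat) (a b : seq bool) : seq bool :=
  let u := zipn [:: a; b] in
  let m := (minn K (size u).-1)./2 in
  mkseq (fun j =>
    if odd j && (j.+1./2 <= m) then nth false u j || nth false u j.+1
    else if ~~ odd j && (0 < j) && (j./2 <= m) then nth false u j.-1 && nth false u j
    else nth false u j) (size u).

Definition sort_desc (r : seq bool) : seq bool := sort geb r.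

(* 4oe_merge with fuel; the superscript s is the total length of the inputs,
   which strictly decreases on recursive calls, so fuel s suffices. *)
Fixpoint merge4_rec (fuel k : nat) (w x y z : seq bool) : seq bool :=
  match fuel with
  | 0 => w
  | n.+1 =>
    if size x == 0 then w
    else if size w == 1 then sort_desc (zipn [:: w; x; y; z])
    else
      let sa := uphalf (size w) + uphalf (size x) + uphalf (size y) + uphalf (size z) in
      let sb := (size w)./2 + (size x)./2 + (size y)./2 + (size z)./2 in
      let a := merge4_rec n (minn sa (k./2 + 2)) (odds w) (odds x) (odds y) (odds z) in
      let b := merge4_rec n (minn sb k./2) (evens w) (evens x) (evens y) (evens z) in
      let c := oe_combine (k./2 + 1) (odds a) (odds b) in
      let d := oe_combine k./2 (evens a) (evens b) in
      oe_combine k c d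
  end.

Definition merge4 (k : nat) (w x y z : seq bool) : seq bool :=
  merge4_rec (size w + size x + size y + size z) k w x y z.

(* Main.v *)
Require Import Defs.
From mathcomp Require Import all_boot zify.
Set Implicit Arguments. Unset Strict Implicit. Unset Printing Implicit Defensive.

Definition F (T : Type) (b : bool) m (r : seq T) :=
  [seq x.2 | x <- zip (iota m (size r)) r & odd x.1 (+) b].

Lemma Fcons T b m (x : T) r : F b m (x::r) = if odd m (+) b then x :: F b m.+1 r else F b m.+1 r.
Proof. by rewrite /F /=; case: ifP. Qed.

Lemma Fshift T (r : seq T) : forall b m, F b m.+1 r = F (~~ b) m r.
Proof.
elim: r => [|x r IH] b m //.
by rewrite !Fcons IH /= addbN addNb.
Qed.

Lemma oddsF T (r : seq T) : odds r = F true 0 r.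
Proof. by rewrite /odds /F; congr map; apply: eq_filter => -[i v] /=; rewrite addbT. Qed.
Lemma evensF T (r : seq T) : evens r = F false 0 r.
Proof. by rewrite /evens /F; congr map; apply: eq_filter => -[i v] /=; rewrite addbF. Qed.

Lemma odds_nil T : odds (@nil T) = [::]. Proof. by []. Qed.
Lemma evens_nil T : evens (@nil T) = [::]. Proof. by []. Qed.
Lemma odds_cons T (x : T) r : odds (x :: r) = x :: evens r.
Proof. by rewrite oddsF evensF Fcons /= Fshift. Qed.
Lemma evens_cons T (x : T) r : evens (x :: r) = odds r.
Proof. by rewrite oddsF evensF Fcons /= Fshift. Qed.

Lemma oe_props T (r : seq T) :
  [/\ size (odds r) = uphalf (size r), size (evens r) = (size r)./2,
   forall x0 i, nth x0 (odds r) i = nth x0 r i.*2 &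
   forall x0 i, nth x0 (evens r) i = nth x0 r i.*2.+1].
Proof.
elim: r => [|x r [IH1 IH2 IH3 IH4]]; first by split => // x0 i; rewrite !nth_nil.
rewrite odds_cons evens_cons /= IH1 IH2; split => // x0 [|i] //=; by rewrite ?IH3 ?IH4.
Qed.

Lemma count_oe (r : seq bool) : count id (odds r) + count id (evens r) = count id r.
Proof.
elim: r => [|x r IH] //; rewrite odds_cons evens_cons /= -IH; lia.
Qed.

Lemma onth_behead T (l : seq T) i : onth l i.+1 = onth (behead l) i.
Proof. by case: l => //; case: i. Qed.

Lemma maxsize_behead T (ls : seq (seq T)) :
  foldr maxn 0 (map size (map behead ls)) = (foldr maxn 0 (map size ls)).-1.
Proof. elim: ls => [|l ls IH] //=; rewrite IH size_behead; lia. Qed.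

Lemma pmap_mapE A B C (f : B -> option C) (g : A -> B) s :
  pmap f (map g s) = pmap (fun x => f (g x)) s.
Proof. by elim: s => [|x s IH] //=; rewrite IH. Qed.

Lemma zipn_step T (ls : seq (seq T)) :
  zipn ls = if foldr maxn 0 (map size ls) is 0 then [::]
            else pmap (fun l => onth l 0) ls ++ zipn (map behead ls).
Proof.
rewrite /zipn maxsize_behead; case: (foldr maxn 0 (map size ls)) => [|n] //=.
congr cat; rewrite -[1]/(1+0) iotaDl -map_comp; congr flatten.
apply: eq_map => i /=; rewrite pmap_mapE; apply: eq_pmap => l; exact: onth_behead.
Qed.

Lemma zipn2_cons T (x y : T) a b : zipn [:: x :: a; y :: b] = x :: y :: zipn [:: a; b].
Proof. by rewrite zipn_step /= maxn0 maxnSS. Qed.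

Lemma zipn2_nil T (a : seq T) : zipn [:: a; [::]] = a.
Proof.
elim: a => [|x a IH]; first by [].
by rewrite zipn_step /= IH.
Qed.

Lemma zipn2_props (b a : seq bool) : size b <= size a ->
  [/\ size (zipn [:: a; b]) = size a + size b,
      count id (zipn [:: a; b]) = count id a + count id b &
      forall j, nth false (zipn [:: a; b]) j =
        if j < (size b).*2 then (if odd j then nth false b j./2 else nth false a j./2)
        else nth false a (j - size b)].
Proof.
elim: b a => [|y b IH] a Hs.
  by rewrite zipn2_nil; split => //=; [lia | lia | move=> j; rewrite subn0].
case: a Hs => [|x a] //= Hs.
have [IH1 IH2 IH3] := IH a Hs.
rewrite zipn2_cons /= IH1 IH2; split; [lia|lia|].
case=> [|[|j]] //=.
rewrite IH3 doubleS !ltnS; case: ifP => Hj //.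
  by rewrite negbK.
have ->: j.+2 - (size b).+1 = (j - size b).+1 by lia.
by [].
Qed.

Definition G (h : nat -> bool) m j :=
  if odd j && (j.+1./2 <= m) then h j || h j.+1
  else if ~~ odd j && (0 < j) && (j./2 <= m) then h j.-1 && h j
  else h j.

Lemma countG h m n : m.*2 < n -> count (G h m) (iota 0 n) = count h (iota 0 n).
Proof.
elim: m => [|m IH] Hn.
  by apply: eq_count => j; rewrite /G; case: ifP => H1; [lia|]; case: ifP => H2; [lia|].
rewrite -IH; last lia.
have ->: n = m.*2.+1 + (2 + (n - m.*2.+3)) by lia.
rewrite !iotaD !count_cat; congr addn; last congr addn.
- apply: eq_in_count => j; rewrite mem_iota => Hj.
  rewrite /G; repeat (case: ifP => ?); try done; lia.
- rewrite add0n /= /G.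
  have ->: odd m.*2.+1 by rewrite /= odd_double.
  have ->: odd m.*2.+2 = false by rewrite /= odd_double.
  have ->: (m.*2.+2)./2 = m.+1 by lia.
  have ->: (m.*2.+1)./2 = m by lia.
  rewrite /= leqnn ltnn.
  by case: (h m.*2.+1); case: (h m.*2.+2).
- apply: eq_in_count => j; rewrite mem_iota => Hj.
  rewrite /G; repeat (case: ifP => ?); try done; lia.
Qed.

Lemma oe_eqG K a b : oe_combine K a b =
  mkseq (G (nth false (zipn [:: a; b])) ((minn K (size (zipn [:: a; b])).-1)./2))
        (size (zipn [:: a; b])).
Proof. by []. Qed.

Lemma oe_size_count K a b : size b <= size a ->
  size (oe_combine K a b) = size a + size b /\
  count id (oe_combine K a b) = count id a + count id b.
Proof.
move=> Hs; have [Z1 Z2 Z3] := zipn2_props Hs.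
rewrite oe_eqG size_mkseq; split => //.
rewrite -Z2; set u := zipn _.
rewrite /mkseq count_map.
case En: (size u) => [|n]; first by move/eqP: En; rewrite size_eq0 => /eqP ->.
rewrite countG; last lia.
by rewrite -En -[in RHS](mkseq_nth false u) count_map.
Qed.

Definition ones n (r : seq bool) := forall i, i < n -> nth false r i.

Lemma ones_size n r : ones n r -> n <= size r.
Proof.
move=> H; rewrite leqNgt; apply/negP => Hs.
by have := H _ Hs; rewrite nth_default.
Qed.

Lemma ones_le n m r : m <= n -> ones n r -> ones m r.
Proof. move=> Hmn H i Hi; apply: H; lia. Qed.

Definition OEb al be na nb K :=
  minn (al + be) (minn al.*2
    (if be < nb then (if be.+1 <= (minn K (na + nb).-1)./2 then be.*2.+2 else be.*2.+1)
     else al + be)).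

Lemma OEb_spec al be na nb K j : j < OEb al be na nb K ->
  [/\ j < al + be, j < al.*2 &
   (be < nb -> j < be.*2.+1 \/ (j = be.*2.+1 /\ be.+1 <= (minn K (na + nb).-1)./2))].
Proof. rewrite /OEb => H; split; move: H; case: ifP => H1; try case: ifP => H2; lia. Qed.

Lemma oe_ones K a b al be : size b <= size a -> ones al a -> ones be b ->
  ones (OEb al be (size a) (size b) K) (oe_combine K a b).
Proof.
move=> Hs Ha Hb; have [Z1 Z2 Z3] := zipn2_props Hs.
have Sa := ones_size Ha; have Sb := ones_size Hb.
move=> j Hj; rewrite oe_eqG nth_mkseq; last by rewrite Z1; move/OEb_spec: Hj => [? ? ?]; lia.
rewrite Z1; set u := zipn _.
have key : forall i, i < OEb al be (size a) (size b) K ->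
    ~~ ((be < size b) && (i == be.*2.+1)) -> nth false u i.
  move=> i /OEb_spec [Hi1 Hi2 Hi3] Hn; rewrite /u Z3.
  case: ifP => H1; [case: ifP => H2|].
  - apply: Hb; case: (ltnP be (size b)) Hn => /= H; lia.
  - apply: Ha; lia.
  - apply: Ha; lia.
rewrite /G.
case E: ((be < size b) && (j == be.*2.+1)).
  move/andP: E => [E1 /eqP E2].
  move/OEb_spec: (Hj) => [Hj1 Hj2 /(_ E1) Hj3].
  have M1 : be.+1 <= (minn K (size a + size b).-1)./2 by lia.
  have Hal : be.+1 < al by lia.
  rewrite E2 /= odd_double /=.
  rewrite doubleK.
  rewrite ifT //=; apply/orP; right.
  rewrite /u Z3; case: ifP => H1.
    rewrite /= odd_double /=; apply: Ha; lia.
  apply: Ha; lia.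
case: ifP => H1.
  by rewrite key // E.
case: ifP => H2.
  rewrite (key j) ?E // andbT; apply: key.
    move/OEb_spec: (Hj) => [Hj1 Hj2 Hj3]; rewrite /OEb; move: Hj; rewrite /OEb; lia.
  apply/negP => /andP[E1 /eqP E2].
  move/OEb_spec: (Hj) => [Hj1 Hj2 /(_ E1) Hj3]; lia.
by rewrite key ?E.
Qed.
Unset Implicit Arguments.

Lemma OE_val al be na nb K : be <= al -> al <= be + 2 ->
  OEb al be na nb K = if (al == be + 2) && (be < nb) &&
     ~~ ((be.*2.+2 <= K) && (be.*2.+3 <= na + nb)) then be.*2.+1 else al + be.
Proof.
move=> H1 H2; rewrite /OEb; repeat (case: ifP => ?); lia.
Qed.

Lemma OE_ge x al be na nb K : x <= al + be -> x <= al.*2 ->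
  (be < nb -> x <= be.*2.+1 \/ (x <= be.*2.+2 /\ be.*2.+2 <= K /\ be.*2.+3 <= na + nb)) ->
  x <= OEb al be na nb K.
Proof.
move=> H1 H2 H3; rewrite /OEb.
case: (ltnP be nb) => H4; last lia.
move: (H3 H4) => H5; case: ifP => H6; lia.
Qed.

Lemma num2 sa sb p q k x : sb <= sa -> p <= sa -> q <= sb -> q <= p -> p <= q + 4 ->
  q <= k./2 -> p <= k./2 + 2 -> x <= k -> x <= p + q ->
  x <= OEb (OEb (uphalf p) (uphalf q) (uphalf sa) (uphalf sb) (k./2+1))
      (OEb p./2 q./2 sa./2 sb./2 k./2)
      (uphalf sa + uphalf sb) (sa./2 + sb./2) k.
Proof.
move=> H1 H2 H3 H4 H5 H6 H7 H8 H9.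
have V1 := @OE_val (uphalf p) (uphalf q) (uphalf sa) (uphalf sb) (k./2+1) ltac:(lia) ltac:(lia).
have V2 := @OE_val (p./2) (q./2) (sa./2) (sb./2) (k./2) ltac:(lia) ltac:(lia).
rewrite V1 V2 {V1 V2}.
have E1 : uphalf p + p./2 = p by lia.
have E2 : uphalf q + q./2 = q by lia.
have E3 : uphalf sa + sa./2 = sa by lia.
have E4 : uphalf sb + sb./2 = sb by lia.
have F1 : p./2 <= uphalf p <= p./2 + 1 by lia.
have F2 : q./2 <= uphalf q <= q./2 + 1 by lia.
have F3 : sa./2 <= uphalf sa <= sa./2 + 1 by lia.
have F4 : sb./2 <= uphalf sb <= sb./2 + 1 by lia.
have F5 : k./2.*2 <= k <= k./2.*2 + 1 by lia.
move: E1 E2 E3 E4 F1 F2 F3 F4 F5 H6 H7.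
generalize (uphalf p) (p./2) (uphalf q) (q./2) (uphalf sa) (sa./2) (uphalf sb) (sb./2) (k./2).
move=> P p2 Q q2 SA sa2 SB sb2 h E1 E2 E3 E4 F1 F2 F3 F4 F5 H6 H7.
case: ifP => C1; case: ifP => C2; apply: OE_ge; try lia.
all: lia.
Qed.

Lemma num sa sb A B k : sb <= sa -> A <= sa -> B <= sb -> B <= A -> A <= B + 4 ->
  minn k (A + B) <=
  OEb (OEb (uphalf (minn (minn sa (k./2+2)) A)) (uphalf (minn (minn sb k./2) B))
           (uphalf sa) (uphalf sb) (k./2+1))
      (OEb (minn (minn sa (k./2+2)) A)./2 (minn (minn sb k./2) B)./2 sa./2 sb./2 k./2)
      (uphalf sa + uphalf sb) (sa./2 + sb./2) k.
Proof.
move=> H1 H2 H3 H4 H5.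
have F5 : k./2.*2 <= k <= k./2.*2 + 1 by lia.
have Hp : minn (minn sa (k./2+2)) A <= sa by lia.
have Hq : minn (minn sb k./2) B <= sb by lia.
apply: num2 => //; move: F5 Hp Hq; generalize (k./2) => h F5 Hp Hq; lia.
Qed.

Lemma sorted_ones s : sorted geb s -> ones (count id s) s.
Proof.
elim: s => [|v s IH] /=; first by move=> i.
move=> Hp; have Hs := path_sorted Hp.
case: v Hp => Hp.
  by move=> [|i] //= Hi; apply: IH.
have : all (geb false) s.
  by apply: order_path_min Hp => a b c; case: a; case: b; case: c.
move=> Hall; have -> : count id s = 0.
  by elim: s Hall {IH Hs Hp} => [|v s IH2] //=; case: v.
by move=> i.
Qed.

Lemma ones_count p r : ones p r -> p <= count id r.
Proof.
elim: r p => [|v r IH] [|p] // H.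
- by have := H 0 isT.
- have := H 0 isT => /= ->; rewrite /= add1n ltnS; apply: IH => i Hi; exact: (H i.+1).
Qed.

Lemma ones_odds p r : ones p r -> ones (uphalf p) (odds r).
Proof. have [_ _ H _] := oe_props r; move=> Hr i Hi; rewrite H; apply: Hr; lia. Qed.
Lemma ones_evens p r : ones p r -> ones p./2 (evens r).
Proof. have [_ _ _ H] := oe_props r; move=> Hr i Hi; rewrite H; apply: Hr; lia. Qed.

Lemma zipn_small T (ls : seq (seq T)) : all (fun l => size l <= 1) ls -> zipn ls = flatten ls.
Proof.
move=> Hall.
have Hm : foldr maxn 0 (map size ls) <= 1.
  by elim: ls Hall => [|l ls IH] //= /andP[H1 /IH H2]; rewrite geq_max H1.
have Hp : pmap (fun l => onth l 0) ls = flatten ls.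
  elim: ls Hall {Hm} => [|l ls IH] //= /andP[H1 /IH H2].
  by case: l H1 => [|v [|w l]] //= _; rewrite H2.
rewrite zipn_step; case E: (foldr maxn 0 (map size ls)) => [|n].
  elim: ls E {Hall Hm Hp} => [|l ls IH] //=.
  case: l => [|v l] /= E; last by move: E; lia.
  by rewrite IH //; move: E; lia.
rewrite Hp zipn_step maxsize_behead E.
have -> : n = 0 by lia.
by rewrite cats0.
Qed.

Lemma merge4_size_count fuel k w x y z :
  size z <= size y -> size y <= size x -> size x <= size w ->
  size w + size x + size y + size z <= fuel ->
  size (merge4_rec fuel k w x y z) = size w + size x + size y + size z /\
  count id (merge4_rec fuel k w x y z) = count id w + count id x + count id y + count id z.
Proof.
elim: fuel k w x y z => [|n IH] k w x y z Hzy Hyx Hxw Hf.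
  have Hw : size w = 0 by lia.
  have Hx : size x = 0 by lia.
  have Hy : size y = 0 by lia.
  have Hz : size z = 0 by lia.
  move/eqP: Hw; move/eqP: Hx; move/eqP: Hy; move/eqP: Hz.
  by rewrite !size_eq0 => /eqP -> /eqP -> /eqP -> /eqP ->.
rewrite /=.
case: eqP => Hx0.
  move/size0nil: Hx0 => Ex; subst x; move: Hyx => /= Hyx.
  have /size0nil Ey : size y = 0 by lia.
  have /size0nil Ez : size z = 0 by lia.
  subst y z.
  by rewrite /= !addn0.
case: eqP => Hw1.
  rewrite /sort_desc size_sort count_sort zipn_small /=; last first.
    rewrite Hw1; apply/and4P; split => //; lia.
  by rewrite !size_cat !count_cat /=; split; lia.
have [Ow1 Ew1 _ _] := oe_props w.
have [Ox1 Ex1 _ _] := oe_props x.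
have [Oy1 Ey1 _ _] := oe_props y.
have [Oz1 Ez1 _ _] := oe_props z.
have Cw := count_oe w; have Cx := count_oe x; have Cy := count_oe y; have Cz := count_oe z.
set a := merge4_rec n _ (odds w) (odds x) (odds y) (odds z).
set b := merge4_rec n _ (evens w) (evens x) (evens y) (evens z).
have [Sa Ca] : size a = uphalf (size w) + uphalf (size x) + uphalf (size y) + uphalf (size z) /\ count id a = count id (odds w) + count id (odds x) + count id (odds y) + count id (odds z).
  rewrite -Ow1 -Ox1 -Oy1 -Oz1; apply: IH; rewrite ?Ow1 ?Ox1 ?Oy1 ?Oz1; lia.
have [Sb Cb] : size b = (size w)./2 + (size x)./2 + (size y)./2 + (size z)./2 /\ count id b = count id (evens w) + count id (evens x) + count id (evens y) + count id (evens z).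
  rewrite -Ew1 -Ex1 -Ey1 -Ez1; apply: IH; rewrite ?Ew1 ?Ex1 ?Ey1 ?Ez1; lia.
have [Oa1 Ea1 _ _] := oe_props a.
have [Ob1 Eb1 _ _] := oe_props b.
have Ca2 := count_oe a; have Cb2 := count_oe b.
have [Sc Cc] := @oe_size_count (k./2 + 1) (odds a) (odds b) ltac:(rewrite Oa1 Ob1; lia).
have [Sd Cd] := @oe_size_count (k./2) (evens a) (evens b) ltac:(rewrite Ea1 Eb1; lia).
have [So Co] := @oe_size_count k (oe_combine (k./2 + 1) (odds a) (odds b))
   (oe_combine (k./2) (evens a) (evens b)) ltac:(rewrite Sc Sd Oa1 Ob1 Ea1 Eb1; lia).
rewrite So Co Sc Sd Cc Cd Oa1 Ob1 Ea1 Eb1; split; lia.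
Qed.

Lemma merge4_ones fuel k w x y z pw px py pz :
  size z <= size y -> size y <= size x -> size x <= size w ->
  size w + size x + size y + size z <= fuel ->
  ones pw w -> ones px x -> ones py y -> ones pz z ->
  ones (minn k (pw + px + py + pz)) (merge4_rec fuel k w x y z).
Proof.
elim: fuel k w x y z pw px py pz => [|n IH] k w x y z pw px py pz Hzy Hyx Hxw Hf Hw Hx Hy Hz;
  have Sw := ones_size Hw; have Sx := ones_size Hx; have Sy := ones_size Hy; have Sz := ones_size Hz.
  by move=> i Hi; lia.
rewrite /=.
case: eqP => Hx0.
  apply: ones_le Hw; lia.
case: eqP => Hw1.
  have Ss : sorted geb (sort_desc (zipn [:: w; x; y; z])).
    by apply: sort_sorted => u v; case: u; case: v.
  apply: (@ones_le _ _ _ _ (sorted_ones _ Ss)).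
  rewrite /sort_desc count_sort zipn_small /=; last first.
    rewrite Hw1; apply/and4P; split => //; lia.
  rewrite !count_cat /=.
  have := @ones_count _ _ Hw; have := @ones_count _ _ Hx; have := @ones_count _ _ Hy; have := @ones_count _ _ Hz; lia.
have [Ow1 Ew1 _ _] := oe_props w.
have [Ox1 Ex1 _ _] := oe_props x.
have [Oy1 Ey1 _ _] := oe_props y.
have [Oz1 Ez1 _ _] := oe_props z.
set sa := uphalf (size w) + uphalf (size x) + uphalf (size y) + uphalf (size z).
set sb := (size w)./2 + (size x)./2 + (size y)./2 + (size z)./2.
set a := merge4_rec n _ (odds w) (odds x) (odds y) (odds z).
set b := merge4_rec n _ (evens w) (evens x) (evens y) (evens z).
have Sa : size a = sa.
  rewrite /sa -Ow1 -Ox1 -Oy1 -Oz1; apply: (proj1 (merge4_size_count _ _ _ _ _ _ _ _ _ _));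
  rewrite ?Ow1 ?Ox1 ?Oy1 ?Oz1; lia.
have Sb : size b = sb.
  rewrite /sb -Ew1 -Ex1 -Ey1 -Ez1; apply: (proj1 (merge4_size_count _ _ _ _ _ _ _ _ _ _));
  rewrite ?Ew1 ?Ex1 ?Ey1 ?Ez1; lia.
set A := uphalf pw + uphalf px + uphalf py + uphalf pz.
set B := pw./2 + px./2 + py./2 + pz./2.
have Ha : ones (minn (minn sa (k./2 + 2)) A) a.
  apply: IH; rewrite ?Ow1 ?Ox1 ?Oy1 ?Oz1; try lia; exact: ones_odds.
have Hb : ones (minn (minn sb k./2) B) b.
  apply: IH; rewrite ?Ew1 ?Ex1 ?Ey1 ?Ez1; try lia; exact: ones_evens.
have [Oa1 Ea1 _ _] := oe_props a.
have [Ob1 Eb1 _ _] := oe_props b.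
have Hc := @oe_ones (k./2 + 1) _ _ _ _ (ltac:(rewrite Oa1 Ob1 Sa Sb; lia) : size (odds b) <= size (odds a))
   (@ones_odds _ _ Ha) (@ones_odds _ _ Hb).
have Hd := @oe_ones (k./2) _ _ _ _ (ltac:(rewrite Ea1 Eb1 Sa Sb; lia) : size (evens b) <= size (evens a))
   (@ones_evens _ _ Ha) (@ones_evens _ _ Hb).
have [Sc _] := @oe_size_count (k./2 + 1) (odds a) (odds b) ltac:(rewrite Oa1 Ob1; lia).
have [Sd _] := @oe_size_count (k./2) (evens a) (evens b) ltac:(rewrite Ea1 Eb1; lia).
have Ho := @oe_ones k _ _ _ _ (ltac:(rewrite Sc Sd Oa1 Ob1 Ea1 Eb1; lia) :
   size (oe_combine (k./2) (evens a) (evens b)) <= size (oe_combine (k./2 + 1) (odds a) (odds b))) Hc Hd.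
apply: (@ones_le _ _ _ _ Ho).
rewrite Sc Sd Oa1 Ob1 Ea1 Eb1 Sa Sb.
have -> : pw + px + py + pz = A + B by rewrite /A /B; lia.
apply: num; rewrite /sa /sb /A /B; lia.
Qed.

Lemma geb_trans : transitive geb.
Proof. by move=> a b c; case: a; case: b; case: c. Qed.

Lemma ts_nth k r : top_sorted k r ->
  forall i j, i < j -> i < k -> nth false r j -> nth false r i.
Proof.
move=> /andP[Hs /allP Ha] i j Hij Hik Hj.
have Hjr : j < size r by rewrite ltnNge; apply/negP => H; rewrite nth_default in Hj.
case: (ltnP j k) => Hjk.
  have := @sorted_ltn_nth _ geb geb_trans false (take k r) Hs i j.
  rewrite !inE !size_take !nth_take //.
  case: ifP => _; move=> /(_ ltac:(lia) ltac:(lia) Hij); rewrite /geb Hj //.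
have Hi : nth false r i \in take k r.
  rewrite -(nth_take false Hik); apply: mem_nth; rewrite size_take; case: ifP => ? //; exact: ltn_trans Hij Hjr.
have /allP := Ha _ Hi => /(_ (nth false r j)).
rewrite /geb Hj /= => -> //.
rewrite -Hj (_ : nth false r j = nth false (drop k r) (j - k)); last first.
  by rewrite nth_drop; congr nth; lia.
by apply: mem_nth; rewrite size_drop ltn_sub2r // (leq_ltn_trans Hjk Hjr).
Qed.

Lemma nth_ts k r : (forall i j, i < j -> i < k -> nth false r j -> nth false r i) ->
  top_sorted k r.
Proof.
move=> H; apply/andP; split.
  apply/(sortedP false) => i; rewrite size_take => Hi.
  rewrite !nth_take; try (case: ifP Hi => ? ?; lia).
  rewrite /geb; apply/implyP; apply: H => //; case: ifP Hi => ? ?; lia.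
apply/(all_nthP false) => i; rewrite size_take => Hi.
apply/(all_nthP false) => j; rewrite size_drop => Hj.
rewrite nth_drop nth_take; last by case: ifP Hi => ? ?; lia.
rewrite /geb; apply/implyP; apply: H; try lia; case: ifP Hi => ? ?; lia.
Qed.

Lemma ts_ones k r : top_sorted k r -> ones (minn k (count id r)) r.
Proof.
move=> Ht i Hi; apply/negPn/negP => Hn.
have Hd : count id (drop i r) = 0.
  apply/eqP; rewrite -leqn0 leqNgt -has_count; apply/(has_nthP false) => -[j Hj].
  rewrite nth_drop => Hij.
  case: j Hj Hij => [|j] Hj Hij; first by rewrite addn0 (negbTE Hn) in Hij.
  by have := @ts_nth _ _ Ht i (i + j.+1) ltac:(lia) ltac:(lia) Hij; rewrite (negbTE Hn).
have := count_cat id (take i r) (drop i r); rewrite cat_take_drop Hd addn0.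
have := count_size id (take i r); rewrite size_take; case: ifP => ?; lia.
Qed.

Lemma ones_ts k r : ones (minn k (count id r)) r -> top_sorted k r.
Proof.
move=> Ho; apply: nth_ts => i j Hij Hik Hj.
case: (ltnP i (count id r)) => Hic; first by apply: Ho; lia.
have O1 : ones (count id r) (take j r).
  by move=> t Ht; rewrite nth_take; [apply: Ho; lia | lia].
have O2 : ones 1 (drop j r).
  by move=> [|t] Ht; [rewrite nth_drop addn0 | lia].
have H1 := @ones_count _ _ O1.
have H2 := @ones_count _ _ O2.
have := count_cat id (take j r) (drop j r); rewrite cat_take_drop; lia.
Qed.
Theorem mainTheorem8 (k k' : nat) (w x y z : seq bool) :
  1 <= k' -> k' <= k ->
  size z <= size y -> size y <= size x -> size x <= size w ->
  top_sorted k' w -> top_sorted k' x -> top_sorted k' y -> top_sorted k' z ->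
  k <= size w + size x + size y + size z ->
  top_sorted k' (merge4 k w x y z).
Proof.
move=> Hk1 Hkk Hzy Hyx Hxw Hw Hx Hy Hz Hks.
apply: ones_ts; rewrite /merge4.
have [_ Cnt] := @merge4_size_count _ k w x y z Hzy Hyx Hxw (leqnn _).
have Ho := @merge4_ones _ k w x y z _ _ _ _ Hzy Hyx Hxw (leqnn _)
  (ts_ones _ _ Hw) (ts_ones _ _ Hx) (ts_ones _ _ Hy) (ts_ones _ _ Hz).
apply: (@ones_le _ _ _ _ Ho); rewrite Cnt; lia.
Qed.
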